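(* Assume $\mathsf G$ is semisimple and let $\mathfrak k$ be a toral $\mathsf H$-subalgebra of $\mathfrak g$. Then the map $\mathfrak k\to\mathfrak{gl}(\mathfrak m_{\mathfrak k}^\perp)$, $X\mapsto\mathrm{ad}(X)|_{\mathfrak m_{\mathfrak k}^\perp}$, is injective.
   Context: $\mathsf G$ compact Lie group, $\mathsf H\subset\mathsf G$ closed, $\mathsf G/\mathsf H$ compact, connected and almost effective. $Q$ is an $\mathrm{Ad}(\mathsf G)$-invariant inner product on $\mathfrak g$ and $\mathfrak m$ the $Q$-orthogonal complement of $\mathfrak h$. An $\mathsf H$-subalgebra is an $\mathrm{Ad}(\mathsf H)$-invariant Lie subalgebra $\mathfrak k$ with $\mathfrak h\subsetneq\mathfrak k\subsetneq\mathfrak g$; it is toral if $[\mathfrak k,\mathfrak k]\subset\mathfrak h$. For such $\mathfrak k$, $\mathfrak m_{\mathfrak k}=\mathfrak k\cap\mathfrak m$ (the $Q$-orthogonal complement of $\mathfrak h$ in $\mathfrak k$) and $\mathfrak m_{\mathfrak k}^\perp$ is the $Q$-orthogonal complement of $\mathfrak m_{\mathfrak k}$ in $\mathfrak m$; one has $[\mathfrak k,\mathfrak m_{\mathfrak k}^\perp]\subset\mathfrak m_{\mathfrak k}^\perp$. *)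

(* Defs.v *)
(* Lie-algebra level model of the setting. *)
From HB Require Import structures.
From mathcomp Require Import all_boot all_order all_algebra.
Set Implicit Arguments. Unset Strict Implicit. Unset Printing Implicit Defensive.
Import Order.TTheory GRing.Theory Num.Theory.
Local Open Scope ring_scope.

Section LieDefs.
Variables (R : realFieldType) (V : vectType R).

Definition lie_bracket (br : V -> V -> V) : Prop :=
  [/\ (forall (a : R) x y z, br (a *: x + y) z = a *: br x z + br y z),
      (forall x y, br x y = - br y x)
    & (forall x y z, br x (br y z) + br y (br z x) + br z (br x y) = 0)].

Definition lie_subalgebra (br : V -> V -> V) (S : {vspace V}) : Prop :=
  forall x y, x \in S -> y \in S -> br x y \in S.

Definition lie_ideal (br : V -> V -> V) (I : {vspace V}) : Prop :=
  forall x y, y \in I -> br x y \in I.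

Definition bracket_space (br : V -> V -> V) (U W : {vspace V}) : {vspace V} :=
  <<[seq br x y | x <- (vbasis U : seq V), y <- (vbasis W : seq V)]>>%VS.

Definition derived (br : V -> V -> V) (I : {vspace V}) (n : nat) : {vspace V} :=
  iter n (fun J => bracket_space br J J) I.

Definition solvable_subspace (br : V -> V -> V) (I : {vspace V}) : Prop :=
  exists n, derived br I n = 0%VS.

Definition lie_semisimple (br : V -> V -> V) : Prop :=
  forall I, lie_ideal br I -> solvable_subspace br I -> I = 0%VS.

Definition inner_product (Q : V -> V -> R) : Prop :=
  [/\ (forall (a : R) x y z, Q (a *: x + y) z = a * Q x z + Q y z),
      (forall x y, Q x y = Q y x)
    & (forall x, x != 0 -> 0 < Q x x)].

(* infinitesimal Ad-invariance: ad(x) is Q-skew *)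
Definition ad_invariant (br : V -> V -> V) (Q : V -> V -> R) : Prop :=
  forall x y z, Q (br x y) z + Q y (br x z) = 0.

Definition almost_effective (br : V -> V -> V) (h : {vspace V}) : Prop :=
  forall I, lie_ideal br I -> (I <= h)%VS -> I = 0%VS.

Definition toral_H_subalgebra (br : V -> V -> V) (h k : {vspace V}) : Prop :=
  [/\ ((h <= k)%VS /\ h != k), ((k <= fullv)%VS /\ k != fullv), lie_subalgebra br k,
      (forall x y, x \in h -> y \in k -> br x y \in k)
    & (forall x y, x \in k -> y \in k -> br x y \in h)].

Definition in_m (Q : V -> V -> R) (h : {vspace V}) (Y : V) : Prop :=
  forall Z, Z \in h -> Q Z Y = 0.

Definition in_mk (Q : V -> V -> R) (h k : {vspace V}) (Y : V) : Prop :=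
  Y \in k /\ in_m Q h Y.

Definition in_mk_perp (Q : V -> V -> R) (h k : {vspace V}) (Y : V) : Prop :=
  in_m Q h Y /\ (forall Z, in_mk Q h k Z -> Q Z Y = 0).

End LieDefs.

(* Main.v *)
Require Import Defs.
From HB Require Import structures.
From mathcomp Require Import all_boot all_order all_algebra.
Import Order.TTheory GRing.Theory Num.Theory.
Local Open Scope ring_scope.

Section Main.
Variables (R : realFieldType) (V : vectType R) (br : V -> V -> V)
  (Q : V -> V -> R) (h k : {vspace V}).
Hypotheses (Hbr : lie_bracket br) (HQ : inner_product Q)
  (Hinv : ad_invariant br Q) (Htor : toral_H_subalgebra br h k).

Lemma brl1 (a : R) x y z : br (a *: x + y) z = a *: br x z + br y z.
Proof. by case: Hbr => H _ _; apply: H. Qed.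
Lemma brA x y : br x y = - br y x.
Proof. by case: Hbr => _ H _; apply: H. Qed.
Lemma brJ x y z : br x (br y z) + br y (br z x) + br z (br x y) = 0.
Proof. by case: Hbr => _ _ H; apply: H. Qed.
Lemma brl2 (a : R) z x y : br z (a *: x + y) = a *: br z x + br z y.
Proof. by rewrite (brA z) brl1 (brA x z) (brA y z) scalerN opprD !opprK. Qed.
Lemma brB1 x y z : br (x - y) z = br x z - br y z.
Proof. by have := brl1 (-1) y x z; rewrite !scaleN1r (addrC (- y)) (addrC (- br y z)). Qed.
Lemma brB2 z x y : br z (x - y) = br z x - br z y.
Proof. by have := brl2 (-1) z y x; rewrite !scaleN1r (addrC (- y)) (addrC (- br z y)). Qed.
Lemma brD2 z x y : br z (x + y) = br z x + br z y.
Proof. by have := brl2 1 z x y; rewrite !scale1r. Qed.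
Lemma br02 z : br z 0 = 0.
Proof. by have := brB2 z z z; rewrite !subrr. Qed.

Lemma Ql1 (a : R) x y z : Q (a *: x + y) z = a * Q x z + Q y z.
Proof. by case: HQ => H _ _; apply: H. Qed.
Lemma Qsym x y : Q x y = Q y x.
Proof. by case: HQ => _ H _; apply: H. Qed.
Lemma Qpos x : x != 0 -> 0 < Q x x.
Proof. by case: HQ => _ _ H; apply: H. Qed.
Lemma Ql2 (a : R) z x y : Q z (a *: x + y) = a * Q z x + Q z y.
Proof. by rewrite Qsym Ql1 !(Qsym z). Qed.

Definition brr b := fun x => br x b.
Lemma brr_lin b : linear (brr b).
Proof. by move=> a x y; rewrite /brr brl1. Qed.
Definition brL b : {linear V -> V} :=
  HB.pack (brr b) (GRing.isLinear.Build R V V *:%R (brr b) (brr_lin b)).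
Lemma brLE b x : linfun (brL b) x = br x b.
Proof. by rewrite lfunE. Qed.

Definition brl b := fun x => br b x.
Lemma brl_lin b : linear (brl b).
Proof. by move=> a x y; rewrite /brl brl2. Qed.
Definition brR b : {linear V -> V} :=
  HB.pack (brl b) (GRing.isLinear.Build R V V *:%R (brl b) (brl_lin b)).
Lemma brRE b x : linfun (brR b) x = br b x.
Proof. by rewrite lfunE. Qed.

Lemma gen_sum (f : V -> R) (hf : forall a x y, f (a *: x + y) = a * f x + f y)
   n (c : 'I_n -> R) (v : 'I_n -> V) :
  f (\sum_i c i *: v i) = \sum_i c i * f (v i).
Proof.
elim/big_rec2: _ => [|i y1 y2 _ <-]; last by rewrite hf.
have := hf (-1) 0 0; rewrite scaler0 addr0 mulN1r addNr; done.
Qed.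

Definition P Z := forall b, b \in k -> Q b Z = 0.

Lemma Pspan Z : (forall i : 'I_(\dim k), Q (vbasis k)`_i Z = 0) -> P Z.
Proof.
move=> H b Hb; rewrite (coord_vbasis Hb) (gen_sum (fun x => Q x Z)).
  by rewrite big1 // => i _; rewrite H mulr0.
by move=> a x y; rewrite Ql1.
Qed.

Definition phi (Y : V) : 'rV[R]_(\dim k) := \row_(i < \dim k) Q (vbasis k)`_i Y.
Lemma phi_lin : linear phi.
Proof. by move=> a x y; apply/rowP => i; rewrite !mxE Ql2. Qed.
Definition phiL : {linear V -> 'rV[R]_(\dim k)} :=
  HB.pack phi (GRing.isLinear.Build R V _ *:%R phi phi_lin).

Lemma kP0 x : x \in k -> P x -> x = 0.
Proof.
move=> xk Px; apply/eqP; apply/contraT => nx.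
by have := Qpos x nx; rewrite (Px x xk) ltxx.
Qed.

Lemma decomp Y : exists2 y, y \in k & P (Y - y).
Proof.
have ker0 : (k :&: lker (linfun phiL) = 0)%VS.
  apply/eqP; rewrite -subv0; apply/subvP => y /memv_capP[yk].
  rewrite memv_ker lfunE /= => /eqP phi0; rewrite memv0; apply/eqP.
  apply: kP0 => //; apply: Pspan => i.
  by have := congr1 (fun m : 'rV[R]_(\dim k) => m 0 i) phi0; rewrite !mxE.
have full : (linfun phiL @: k)%VS = fullv.
  apply/eqP; rewrite eqEdim subvf dimvf /= limg_dim_eq //.
  by rewrite dim_matrix mul1r.
have : linfun phiL Y \in (linfun phiL @: k)%VS by rewrite full memvf.
case/memv_imgP => y yk; rewrite !lfunE /= => e.
exists y => //; apply: Pspan => i.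
have := congr1 (fun m : 'rV[R]_(\dim k) => m 0 i) e; rewrite !mxE => e'.
by rewrite addrC -scaleN1r Ql2 e' mulN1r addNr.
Qed.

Lemma Pbr x Z : x \in k -> P Z -> P (br x Z).
Proof.
case: Htor => _ _ ksub _ _ xk PZ b bk.
have := Hinv x b Z; rewrite (PZ _ (ksub _ _ xk bk)) add0r; done.
Qed.

Lemma Q20 b : Q b 0 = 0.
Proof. by have := Ql2 (-1) b 0 0; rewrite scaler0 addr0 mulN1r addNr. Qed.

Lemma PN Z : P Z -> P (- Z).
Proof.
by move=> PZ b bk; have := Ql2 (-1) b Z 0; rewrite scaleN1r addr0 Q20 addr0 PZ // mulr0.
Qed.

Definition ebas := vbasis (fullv : {vspace V}).
Definition a : {vspace V} :=
  (k :&: \bigcap_(i < \dim (fullv : {vspace V})) (linfun (brL ebas`_i) @^-1: k))%VS.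

Lemma memaP x : x \in a <-> x \in k /\ forall Y, br x Y \in k.
Proof.
split.
  case/memv_capP => xk; rewrite memvE => /subv_bigcapP H; split => // Y.
  rewrite (coord_vbasis (memvf Y)) -brRE linear_sum; apply: memv_suml => i _.
  rewrite linearZ /= brRE memvZ //.
  by have := H i isT; rewrite -memvE -memv_preim brLE.
case=> xk H; apply/memv_capP; split => //; rewrite memvE.
by apply/subv_bigcapP => i _; rewrite -memvE -memv_preim brLE.
Qed.

Lemma memaP2 x : x \in a <-> x \in k /\ forall Z, P Z -> br x Z = 0.
Proof.
split.
  case/memaP => xk H; split => // Z PZ; apply: kP0; first exact: H.
  exact: Pbr.
case=> xk H; apply/memaP; split => // Y.
case: (decomp Y) => y yk Py.
rewrite -(subrK y Y) brD2 H // add0r.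
by case: Htor => _ _ ksub _ _; apply: ksub.
Qed.

Lemma brD1 x y z : br (x + y) z = br x z + br y z.
Proof. by have := brl1 1 x y z; rewrite !scale1r. Qed.

Lemma a_ideal : lie_ideal br a.
Proof.
move=> x y ya.
have [xk xkk Pxk] := decomp x.
have [yk Hy] := (memaP2 y).1 ya.
rewrite -(subrK xk x) brD1 (brA (x - xk)) (Hy _ Pxk) oppr0 add0r.
case: Htor => _ _ ksub _ _.
apply/memaP2; split; first exact: ksub.
move=> Z PZ.
have J := brJ Z xk y.
rewrite (Hy Z PZ) br02 addr0 (Hy (br Z xk)) ?addr0 in J; last first.
  by rewrite brA; apply/PN/Pbr.
by rewrite brA J oppr0.
Qed.

Definition b := bracket_space br a a.

Lemma b_le_h : (b <= h)%VS.
Proof.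
apply/span_subvP => z /allpairsP [[u v] [/= ua va ->]].
case: Htor => _ _ _ _ ktor.
apply: ktor; [exact: ((memaP u).1 (vbasis_mem ua)).1|exact: ((memaP v).1 (vbasis_mem va)).1].
Qed.

Lemma memb u w : u \in a -> w \in a -> br u w \in b.
Proof.
move=> ua wa.
rewrite (coord_vbasis ua) -brLE linear_sum; apply: memv_suml => i _.
rewrite linearZ /= brLE; apply: memvZ.
rewrite (coord_vbasis wa) -brRE linear_sum; apply: memv_suml => j _.
rewrite linearZ /= brRE; apply: memvZ.
apply: memv_span; apply: allpairs_f; apply: mem_nth; by rewrite size_tuple.
Qed.

Lemma b_ideal : lie_ideal br b.
Proof.
move=> x z zb.
have H : (b <= linfun (brR x) @^-1: b)%VS.
  apply/span_subvP => g /allpairsP [[u v] [/= ua va ->]].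
  rewrite -memv_preim brRE.
  have ua' := vbasis_mem ua; have va' := vbasis_mem va.
  have E : br x (br u v) = - (br u (br v x) + br v (br x u)).
    by apply/eqP; rewrite -subr_eq0 opprK addrA brJ.
  rewrite E memvN memvD // memb //; last exact: a_ideal.
  by rewrite brA memvN; apply: a_ideal.
by have := subvP H z zb; rewrite -memv_preim brRE.
Qed.

Lemma main_in (Hss : lie_semisimple br) (Heff : almost_effective br h) X1 X2 :
  X1 \in k -> X2 \in k -> (forall Y, in_mk_perp Q h k Y -> br X1 Y = br X2 Y) ->
  X1 = X2.
Proof.
move=> k1 k2 H.
have b0 : b = 0%VS by apply: Heff; [exact: b_ideal|exact: b_le_h].
have a0 : a = 0%VS.
  by apply: Hss; [exact: a_ideal| exists 1%N].
have hk : (h <= k)%VS by case: Htor => [[hk _] _ _ _ _].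
have Xa : X1 - X2 \in a.
  apply/memaP2; split; first by rewrite memvB.
  move=> Z PZ; rewrite brB1 H ?subrr //; split.
    by move=> z zh; apply: PZ; exact: (subvP hk).
  by move=> Z' [Z'k _]; exact: PZ.
by move: Xa; rewrite a0 memv0 subr_eq0 => /eqP.
Qed.

End Main.

Theorem mainTheorem8 (R : realFieldType) (V : vectType R)
    (br : V -> V -> V) (Q : V -> V -> R) (h k : {vspace V}) :
  lie_bracket br -> lie_semisimple br ->
  inner_product Q -> ad_invariant br Q ->
  lie_subalgebra br h -> almost_effective br h ->
  toral_H_subalgebra br h k ->
  forall X1 X2 : V, X1 \in k -> X2 \in k ->
    (forall Y : V, in_mk_perp Q h k Y -> br X1 Y = br X2 Y) ->
    X1 = X2.
Proof.
move=> Hbr Hss HQ Hinv _ Heff Htor.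
exact: (@main_in R V br Q h k Hbr HQ Hinv Htor Hss Heff).
Qed.
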